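(* Consider any sequences evolved by Algorithm 1, with $\gamma_k,\Gamma_k,\beta_k$ as in the context. For $k\ge0$ and $x\in\mathcal H$ put $\tilde x:=\frac{a_{k+1}}{A_{k+1}}x+\frac{A_k}{A_{k+1}}y^k$, $z^k:=\frac{a_{k+1}}{A_{k+1}}x^k+\frac{A_k}{A_{k+1}}y^k$ and $\Delta_k:=\frac{(1+\mu A_k)A_{k+1}}{2a_{k+1}^2}\|\tilde x-z^k\|^2+\frac{\mu A_k}{2a_{k+1}}\|\tilde x-y^k\|^2$. Then for all $k\ge0$ and $x\in\mathcal H$: (a) $a_{k+1}\gamma_{k+1}(x)+A_k\gamma_{k+1}(y^k)=A_{k+1}\gamma_{k+1}(\tilde x)+\frac{\mu a_{k+1}A_k}{2A_{k+1}}\|x-y^k\|^2$; (b) $A_kh(y^k)+A_{k+1}\Gamma_{k+1}(x)+\frac12\|x-x^0\|^2\ge\beta_k+A_{k+1}[\gamma_{k+1}(\tilde x)+\Delta_k]$; (c) $\Delta_k=\frac{1}{2\lambda_{k+1}}\Big[\|\tilde x-\tilde x^k\|^2+\frac{\mu(1+\mu A_k)\lambda_{k+1}^2A_k}{a_{k+1}A_{k+1}}\|x^k-y^k\|^2\Big]$; (d) $A_kh(y^k)+A_{k+1}\Gamma_{k+1}(x)+\frac12\|x-x^0\|^2\ge\beta_k+A_{k+1}h(y^{k+1})+\frac{1-\sigma^2}{2}\cdot\frac{A_{k+1}}{\lambda_{k+1}}\|y^{k+1}-\tilde x^k\|^2+\frac{\mu(1+\mu A_k)\lambda_{k+1}A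_k}{2a_{k+1}}\|x^k-y^k\|^2$.
   Context: Setting: $\mathcal H$ is a finite-dimensional real inner product space with inner product $\langle\cdot,\cdot\rangle$ and norm $\|\cdot\|$. $f,g:\mathcal H\to(-\infty,\infty]$ are proper, closed, convex functions, $h:=f+g$ has nonempty domain, and $g$ is $\mu$-strongly convex for some $\mu>0$, i.e. $g(tx+(1-t)y)\le tg(x)+(1-t)g(y)-\frac{\mu}{2}t(1-t)\|x-y\|^2$ for all $x,y\in\mathcal H$, $t\in[0,1]$. $x^*$ denotes the unique minimizer of $h$. For $\varepsilon\ge 0$, $\partial_\varepsilon f(y):=\{u\in\mathcal H: f(w)\ge f(y)+\langle u,w-y\rangle-\varepsilon\ \forall w\in\mathcal H\}$, and $\partial g:=\partial_0 g$. Algorithm 1: Choose $x^0,y^0\in\mathcal H$ and $\sigma\in[0,1]$, and set $A_0=0$. For $k=0,1,2,\dots$: choose $\lambda_{k+1}>0$, set $a_{k+1}=\frac{(1+2\mu A_k)\lambda_{k+1}+\sqrt{(1+2\mu A_k)^2\lambda_{k+1}^2+4(1+\mu A_k)A_k\lambda_{k+1}}}{2}$ and $\tilde x^k=\frac{a_{k+1}-\mu A_k\lambda_{k+1}}{A_k+a_{k+1}}x^k+\frac{A_k+\mu A_k\lambda_{k+1}}{A_k+a_{k+1}}y^k$; compute $(y^{k+1},v^{k+1},\varepsilon_{k+1})\in\mathcal H\times\mathcal H\times[0,\infty)$ such that $v^{k+1}\in\partial_{\varepsilon_{k+1}}f(y^{k+1})+\partial g(y^{k+1})$ and $\frac{\|\lambda_{k+1}v^{k+1}+y^{k+1}-\tilde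 x^k\|^2}{1+\lambda_{k+1}\mu}+2\lambda_{k+1}\varepsilon_{k+1}\le\sigma^2\|y^{k+1}-\tilde x^k\|^2$; then set $A_{k+1}=A_k+a_{k+1}$ and $x^{k+1}=\frac{1+\mu A_k}{1+\mu A_{k+1}}x^k+\frac{\mu a_{k+1}}{1+\mu A_{k+1}}y^{k+1}-\frac{a_{k+1}}{1+\mu A_{k+1}}v^{k+1}$. ''Sequences evolved by Algorithm 1'' means any sequences satisfying all these relations for every $k\ge 0$. Auxiliary functions: for $k\ge1$ and $x\in\mathcal H$, $\gamma_k(x):=h(y^k)+\langle v^k,x-y^k\rangle-\varepsilon_k+\frac{\mu}{2}\|x-y^k\|^2$; $\Gamma_0\equiv 0$ and, for $k\ge1$, $\Gamma_k(x):=\sum_{j=1}^k\frac{a_j}{A_k}\gamma_j(x)$ (so $A_k\Gamma_k=\sum_{j=1}^k a_j\gamma_j$). For $k\ge0$, $\beta_k:=\inf_{x\in\mathcal H}\{A_k\Gamma_k(x)+\frac12\|x-x^0\|^2\}$ (so $\beta_0=0$). *)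

(* Defs.v *)
(* Convention: the Hilbert space H is a finite-
   dimensional vector space V : vectType R over R : realType, equipped with an
   explicit inner product ip (see is_inner_product). *)
From HB Require Import structures.
From mathcomp Require Import all_boot all_order all_algebra.
From mathcomp Require Import all_classical all_reals all_analysis.
Set Implicit Arguments. Unset Strict Implicit. Unset Printing Implicit Defensive.
Import Order.TTheory GRing.Theory Num.Theory.
Import numFieldNormedType.Exports.
Local Open Scope ring_scope.
Local Open Scope classical_set_scope.

Section Defs.
Variables (R : realType) (V : vectType R) (ip : V -> V -> R).

Definition is_inner_product :=
  [/\ forall x y, ip x y = ip y x,
      forall (c : R) x y z, ip (c *: x + y) z = c * ip x z + ip y z &
      forall x, x != 0 -> 0 < ip x x].

Definition nrm (x : V) : R := Num.sqrt (ip x x).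

Definition proper_fun (f : V -> \bar R) :=
  (forall x, f x != -oo%E) /\ (exists x, (f x < +oo)%E).

(* closed = lower semicontinuous (sequentially, w.r.t. the norm topology) *)
Definition closed_fun (f : V -> \bar R) :=
  forall (x : V) (u : nat -> V),
    (fun n => nrm (u n - x)) @ \oo --> (0 : R) ->
    (f x <= limn_einf (fun n => f (u n)))%E.

(* modulus-m convexity: m = 0 is convexity, m = mu > 0 is mu-strong convexity *)
Definition convex_mod (m : R) (f : V -> \bar R) :=
  forall (x y : V) (t : R), 0 <= t <= 1 ->
    (f (t *: x + (1 - t) *: y)%R <=
       t%:E * f x + (1 - t)%:E * f y - (m / 2 * t * (1 - t) * nrm (x - y) ^+ 2)%:E)%E.

Definition esubdiff (f : V -> \bar R) (e : R) (y u : V) :=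
  forall w, (f y + (ip u (w - y) - e)%:E <= f w)%E.

(* Sequences evolved by Algorithm 1 (lam k.+1 = lambda_{k+1}, a k.+1 = a_{k+1},
   eps k.+1 = eps_{k+1}, xt k = tilde x^k). *)
Definition alg1 (mu : R) (f g : V -> \bar R) (sigma : R)
  (x y v xt : nat -> V) (eps lam a A : nat -> R) :=
  0 <= sigma <= 1 /\ A 0 = 0 /\
  forall k : nat,
    0 < lam k.+1 /\
    a k.+1 = ((1 + 2 * mu * A k) * lam k.+1
              + Num.sqrt ((1 + 2 * mu * A k) ^+ 2 * lam k.+1 ^+ 2
                          + 4 * (1 + mu * A k) * A k * lam k.+1)) / 2 /\
    xt k = ((a k.+1 - mu * A k * lam k.+1) / (A k + a k.+1)) *: x k
           + ((A k + mu * A k * lam k.+1) / (A k + a k.+1)) *: y k /\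
    0 <= eps k.+1 /\
    (exists u w : V, v k.+1 = u + w /\ esubdiff f (eps k.+1) (y k.+1) u
                     /\ esubdiff g 0 (y k.+1) w) /\
    nrm (lam k.+1 *: v k.+1 + y k.+1 - xt k) ^+ 2 / (1 + lam k.+1 * mu)
      + 2 * lam k.+1 * eps k.+1 <= sigma ^+ 2 * nrm (y k.+1 - xt k) ^+ 2 /\
    A k.+1 = A k + a k.+1 /\
    x k.+1 = ((1 + mu * A k) / (1 + mu * A k.+1)) *: x k
             + (mu * a k.+1 / (1 + mu * A k.+1)) *: y k.+1
             - (a k.+1 / (1 + mu * A k.+1)) *: v k.+1.

Definition gamma (mu : R) (f g : V -> \bar R) (y v : nat -> V) (eps : nat -> R)
  (k : nat) (x : V) : \bar R :=
  (f (y k) + g (y k)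
   + (ip (v k) (x - y k) - eps k + mu / 2 * nrm (x - y k) ^+ 2)%:E)%E.

Definition Gamma (mu : R) (f g : V -> \bar R) (y v : nat -> V) (eps a A : nat -> R)
  (k : nat) (x : V) : \bar R :=
  if k is 0 then 0%E
  else (\sum_(1 <= j < k.+1) (a j / A k)%:E * gamma mu f g y v eps j x)%E.

Definition beta (mu : R) (f g : V -> \bar R) (x y v : nat -> V) (eps a A : nat -> R)
  (k : nat) : \bar R :=
  ereal_inf (range (fun z : V =>
    ((A k)%:E * Gamma mu f g y v eps a A k z + (1 / 2 * nrm (z - x 0) ^+ 2)%:E)%E)).

End Defs.

(* Main.v *)
Require Import Defs.
From HB Require Import structures.
From mathcomp Require Import all_boot all_order all_algebra.
From mathcomp Require Import all_classical all_reals all_analysis.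
From mathcomp Require Import ring lra.
Import Order.TTheory GRing.Theory Num.Theory.
Local Open Scope ring_scope.

Section IP.
Variables (R : realType) (V : vectType R) (ip : V -> V -> R).
Hypothesis Hip : is_inner_product ip.

Lemma ipC x y : ip x y = ip y x. Proof. by case: Hip. Qed.
Lemma ipDZl c x y z : ip (c *: x + y) z = c * ip x z + ip y z. Proof. by case: Hip. Qed.
Lemma ip0l z : ip 0 z = 0.
Proof. have := ipDZl (-1) 0 0 z. rewrite scaler0 addr0 mulN1r addNr. by []. Qed.
Lemma ipDl x y z : ip (x + y) z = ip x z + ip y z.
Proof. by have := ipDZl 1 x y z; rewrite scale1r mul1r. Qed.
Lemma ipZl c x z : ip (c *: x) z = c * ip x z.
Proof. by rewrite -[c *: x]addr0 ipDZl ip0l addr0. Qed.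
Lemma ipNl x z : ip (- x) z = - ip x z.
Proof. by rewrite -scaleN1r ipZl mulN1r. Qed.
Lemma ipBl x y z : ip (x - y) z = ip x z - ip y z.
Proof. by rewrite ipDl ipNl. Qed.
Lemma ipDr x y z : ip z (x + y) = ip z x + ip z y.
Proof. by rewrite ipC ipDl !(ipC z). Qed.
Lemma ipZr c x z : ip z (c *: x) = c * ip z x.
Proof. by rewrite ipC ipZl ipC. Qed.
Lemma ipNr x z : ip z (- x) = - ip z x.
Proof. by rewrite ipC ipNl ipC. Qed.
Lemma ipBr x y z : ip z (x - y) = ip z x - ip z y.
Proof. by rewrite ipDr ipNr. Qed.
Lemma ip0r z : ip z 0 = 0. Proof. by rewrite ipC ip0l. Qed.
Lemma ip_ge0 x : 0 <= ip x x.
Proof.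
have [->|nz] := eqVneq x 0; first by rewrite ip0l.
by case: Hip => _ _ /(_ x nz) /ltW.
Qed.
Lemma nrm2 x : nrm ip x ^+ 2 = ip x x.
Proof. by rewrite /nrm sqr_sqrtr // ip_ge0. Qed.
Lemma nrm2_lin p q al be :
  nrm ip (al *: p + be *: q) ^+ 2
  = al ^+ 2 * nrm ip p ^+ 2 + 2 * al * be * ip p q + be ^+ 2 * nrm ip q ^+ 2.
Proof.
rewrite !nrm2 !(ipDl, ipDr, ipZl, ipZr) (ipC q p). ring.
Qed.
Lemma nrm2D p q : nrm ip (p + q) ^+ 2 = nrm ip p ^+ 2 + 2 * ip p q + nrm ip q ^+ 2.
Proof. by rewrite -[p]scale1r -[q]scale1r nrm2_lin !scale1r; ring. Qed.
Lemma nrm2B p q : nrm ip (p - q) ^+ 2 = nrm ip p ^+ 2 - 2 * ip p q + nrm ip q ^+ 2.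
Proof. by rewrite -[p]scale1r -scaleN1r nrm2_lin !scale1r; ring. Qed.
Lemma nrm2Z c p : nrm ip (c *: p) ^+ 2 = c ^+ 2 * nrm ip p ^+ 2.
Proof. by rewrite -[c *: p]addr0 -(scale0r 0) nrm2_lin; ring. Qed.
Lemma nrm2_ge0 p : 0 <= nrm ip p ^+ 2. Proof. by rewrite nrm2 ip_ge0. Qed.

Lemma fin_of_sub (phi : V -> \bar R) e y0 u :
  proper_fun phi -> esubdiff ip phi e y0 u -> phi y0 = (fine (phi y0))%:E.
Proof.
move=> [Hn [x0 Hx0]] Hs; case Ey: (phi y0) => [r| |] //=.
- have := Hs x0; rewrite Ey addye // leye_eq => /eqP E.
  by move: Hx0; rewrite E ltxx.
- by move: (Hn y0); rewrite Ey.
Qed.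

Lemma strong_sub (phi : V -> \bar R) (mu : R) y0 u G :
  proper_fun phi -> 0 <= mu -> convex_mod ip mu phi -> esubdiff ip phi 0 y0 u ->
  phi y0 = G%:E ->
  forall w, ((G + ip u (w - y0) + mu / 2 * nrm ip (w - y0) ^+ 2)%:E <= phi w)%E.
Proof.
move=> [Hn _] Hmu Hc Hs Ey w.
case Ew: (phi w) => [W| |]; last by move: (Hn w); rewrite Ew.
2: by rewrite leey.
rewrite lee_fin.
set N := nrm ip (w - y0) ^+ 2. set I := ip u (w - y0).
have HN : 0 <= N by rewrite /N nrm2_ge0.
set c := mu / 2.
have Hc0 : 0 <= c by rewrite /c; lra.
have key : forall t, 0 < t <= 1 -> 0 <= t * (W - G - I - c * N) + c * N * t ^+ 2.
  move=> t /andP [t0 t1].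
  have H1 := Hs (t *: w + (1 - t) *: y0).
  have H2 := Hc w y0 t.
  rewrite t1 ltW //= in H2.
  have := le_trans H1 (H2 isT).
  rewrite Ew Ey -!EFinM -!EFinD lee_fin.
  have -> : t *: w + (1 - t) *: y0 - y0 = t *: (w - y0).
    by rewrite scalerBr scalerBl scale1r addrCA [y0 + _]addrC addrK.
  rewrite ipZr -/I -/N subr0 /c => H.
  have -> : t * (W - G - I - mu / 2 * N) + mu / 2 * N * t ^+ 2
    = t * W + (1 - t) * G - mu / 2 * t * (1 - t) * N - (G + t * I) by ring.
  by rewrite subr_ge0.
set D := W - G - I - c * N.
suff : 0 <= D by rewrite /D; lra.
rewrite leNgt; apply/negP => HD.
set E := - D + 2 * (c * N).
have cN0 : 0 <= c * N by rewrite mulr_ge0.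
have E0 : 0 < E by rewrite /E; lra.
set t := - D / E.
have t0 : 0 < t by rewrite /t divr_gt0 // oppr_gt0.
have tE : t * E = - D by rewrite /t divfK // gt_eqF.
have t1 : t <= 1.
  rewrite /t ler_pdivrMr // mul1r /E; lra.
have := key t; rewrite t0 t1 => /(_ isT).
have -> : t * D + c * N * t ^+ 2 = t * (D + c * N * t) by ring.
rewrite pmulr_rge0 // => H.
have H' : 0 <= E * (D + c * N * t) by rewrite mulr_ge0 // ltW.
have : E * (D + c * N * t) = E * D - c * N * D.
  have -> : E * (D + c * N * t) = E * D + c * N * (t * E) by ring.
  by rewrite tE; ring.
move=> EE; rewrite EE /E in H'.
have h1 : 0 < D * D by rewrite -mulrNN mulr_gt0 // oppr_gt0.
have h2 : c * N * D <= 0 by rewrite mulr_ge0_le0 // ?mulr_ge0 // ltW.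
lra.
Qed.

Ltac ipx := rewrite ?nrm2 ?(ipDl, ipDr, ipZl, ipZr, ipNl, ipNr).

Variables (f g : V -> \bar R) (mu sigma : R) (x y v xt : nat -> V)
  (eps lam a A : nat -> R).
Hypotheses (Hf : proper_fun f) (Hg : proper_fun g) (Hmu : 0 < mu)
  (Hgc : convex_mod ip mu g) (Halg : alg1 ip mu f g sigma x y v xt eps lam a A).

Lemma A0E : A 0 = 0. Proof. by case: Halg => _ []. Qed.
Definition stepk k := let: conj _ (conj _ H) := Halg in H k.
Lemma lam_pos k : 0 < lam k.+1. Proof. by case: (stepk k). Qed.
Lemma a_def k : a k.+1 = ((1 + 2 * mu * A k) * lam k.+1
              + Num.sqrt ((1 + 2 * mu * A k) ^+ 2 * lam k.+1 ^+ 2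
                          + 4 * (1 + mu * A k) * A k * lam k.+1)) / 2.
Proof. by case: (stepk k) => _ []. Qed.
Lemma xt_def k : xt k = ((a k.+1 - mu * A k * lam k.+1) / (A k + a k.+1)) *: x k
           + ((A k + mu * A k * lam k.+1) / (A k + a k.+1)) *: y k.
Proof. by case: (stepk k) => _ [] _ []. Qed.
Lemma sub_ex k : exists u w : V, v k.+1 = u + w /\ esubdiff ip f (eps k.+1) (y k.+1) u
                     /\ esubdiff ip g 0 (y k.+1) w.
Proof. by case: (stepk k) => _ [] _ [] _ [] _ []. Qed.
Lemma hpe k : nrm ip (lam k.+1 *: v k.+1 + y k.+1 - xt k) ^+ 2 / (1 + lam k.+1 * mu)
      + 2 * lam k.+1 * eps k.+1 <= sigma ^+ 2 * nrm ip (y k.+1 - xt k) ^+ 2.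
Proof. by case: (stepk k) => _ [] _ [] _ [] _ [] _ []. Qed.
Lemma A_rec k : A k.+1 = A k + a k.+1.
Proof. by case: (stepk k) => _ [] _ [] _ [] _ [] _ [] _ []. Qed.
Lemma x_rec k : x k.+1 = ((1 + mu * A k) / (1 + mu * A k.+1)) *: x k
             + (mu * a k.+1 / (1 + mu * A k.+1)) *: y k.+1
             - (a k.+1 / (1 + mu * A k.+1)) *: v k.+1.
Proof. by case: (stepk k) => _ [] _ [] _ [] _ [] _ [] _ []. Qed.

Lemma a_pos_of k : 0 <= A k -> 0 < a k.+1.
Proof.
move=> HA; rewrite a_def divr_gt0 //.
apply: ltr_pwDl; last exact: sqrtr_ge0.
rewrite mulr_gt0 ?lam_pos //.
have : 0 <= mu * A k by rewrite mulr_ge0 // ltW.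
lra.
Qed.
Lemma A_ge0 k : 0 <= A k.
Proof.
elim: k => [|k IH]; first by rewrite A0E.
rewrite A_rec; have := @a_pos_of k IH; lra.
Qed.
Lemma a_pos k : 0 < a k.+1. Proof. exact: (@a_pos_of k (A_ge0 k)). Qed.
Lemma A_pos k : 0 < A k.+1.
Proof. rewrite A_rec; have := a_pos k; have := A_ge0 k; lra. Qed.

Definition Fv j := fine (f (y j)).
Definition Gv j := fine (g (y j)).
Definition gr j w := Fv j + Gv j
  + (ip (v j) (w - y j) - eps j + mu / 2 * nrm ip (w - y j) ^+ 2).

Lemma gamE k w : gamma ip mu f g y v eps k.+1 w = (gr k.+1 w)%:E.
Proof.
have [u [w' [_ [Hu Hw]]]] := sub_ex k.
rewrite /gamma.
have -> : f (y k.+1) = (Fv k.+1)%:E := fin_of_sub _ _ _ _ Hf Hu.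
have -> : g (y k.+1) = (Gv k.+1)%:E := fin_of_sub _ _ _ _ Hg Hw.
by rewrite -!EFinD.
Qed.

Lemma gr_le k w : ((gr k.+1 w)%:E <= f w + g w)%E.
Proof.
have [u [w' [Hv [Hu Hw]]]] := sub_ex k.
have Ef : f (y k.+1) = (Fv k.+1)%:E := fin_of_sub _ _ _ _ Hf Hu.
have Eg : g (y k.+1) = (Gv k.+1)%:E := fin_of_sub _ _ _ _ Hg Hw.
have H1 := Hu w; rewrite Ef -EFinD in H1.
have H2 := strong_sub _ _ _ _ _ Hg (ltW Hmu) Hgc Hw Eg w.
apply: le_trans (leeD H1 H2); rewrite -EFinD lee_fin /gr Hv ipDl.
rewrite le_eqVlt; apply/orP; left; apply/eqP; rewrite /Fv /Gv; ring.
Qed.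

Definition Qs k w := \sum_(1 <= j < k.+1) a j * gr j w.

Lemma Qs_rec k w : Qs k.+1 w = Qs k w + a k.+1 * gr k.+1 w.
Proof. by rewrite /Qs big_nat_recr. Qed.

Lemma AGammaE k w : ((A k)%:E * Gamma ip mu f g y v eps a A k w)%E = (Qs k w)%:E.
Proof.
case: k => [|k]; first by rewrite /= mule0 /Qs big_geq.
rewrite /Gamma.
rewrite (eq_big_nat _ _ (F2 := fun j => ((a j / A k.+1) * gr j w)%:E)); last first.
  by move=> [|j] //= _; rewrite gamE -EFinM.
rewrite sumEFin -EFinM mulr_sumr /Qs; congr EFin; apply: eq_bigr => j _.
have := A_pos k; move=> HA; field; exact: lt0r_neq0 HA.
Qed.

Lemma Pk k w : Qs k w + 1 / 2 * nrm ip (w - x 0) ^+ 2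
  = Qs k (x k) + 1 / 2 * nrm ip (x k - x 0) ^+ 2 + (1 + mu * A k) / 2 * nrm ip (w - x k) ^+ 2.
Proof.
elim: k w => [|k IH] w.
  rewrite /Qs !big_geq // A0E subrr.
  have -> : nrm ip 0 = 0 by rewrite /nrm ip0l sqrtr0.
  ring.
rewrite !Qs_rec.
have E1 := IH w.
have E2 := IH (x k.+1).
have Ha : 0 < a k.+1 := a_pos k.
have HA : 0 <= A k := A_ge0 k.
have Hd : 1 + mu * A k.+1 != 0.
  rewrite A_rec; apply: lt0r_neq0.
  have : 0 < mu * (A k + a k.+1) by rewrite mulr_gt0 // ltr_wpDl.
  lra.
have Ex : x k.+1 = ((1 + mu * A k) / (1 + mu * A k.+1)) *: x k
             + (mu * a k.+1 / (1 + mu * A k.+1)) *: y k.+1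
             - (a k.+1 / (1 + mu * A k.+1)) *: v k.+1 := x_rec k.
rewrite A_rec in Ex Hd *.
have -> : Qs k w + a k.+1 * gr k.+1 w + 1 / 2 * nrm ip (w - x 0) ^+ 2
  = (Qs k w + 1 / 2 * nrm ip (w - x 0) ^+ 2) + a k.+1 * gr k.+1 w by ring.
have -> : Qs k (x k.+1) + a k.+1 * gr k.+1 (x k.+1) + 1 / 2 * nrm ip (x k.+1 - x 0) ^+ 2
  = (Qs k (x k.+1) + 1 / 2 * nrm ip (x k.+1 - x 0) ^+ 2) + a k.+1 * gr k.+1 (x k.+1) by ring.
rewrite E1 E2 /gr Ex.
ipx.
rewrite ?(ipC (x k) w) ?(ipC (y k.+1) w) ?(ipC (v k.+1) w)
        ?(ipC (y k.+1) (x k)) ?(ipC (v k.+1) (x k)) ?(ipC (v k.+1) (y k.+1)).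
field; exact: Hd.
Qed.

Lemma betaE k : beta ip mu f g x y v eps a A k
  = (Qs k (x k) + 1 / 2 * nrm ip (x k - x 0) ^+ 2)%:E.
Proof.
rewrite /beta.
have -> : (fun z => (A k)%:E * Gamma ip mu f g y v eps a A k z
            + (1 / 2 * nrm ip (z - x 0) ^+ 2)%:E)%E
          = (fun z => (Qs k z + 1 / 2 * nrm ip (z - x 0) ^+ 2)%:E).
  by apply: funext => z; rewrite AGammaE -EFinD.
apply/eqP; rewrite eq_le; apply/andP; split.
- by apply: ereal_inf_lbound; exists (x k).
- apply/ereal_infP => _ [z _ <-]; rewrite lee_fin (Pk k z) lerDl.
  apply: mulr_ge0; last exact: nrm2_ge0.
  have : 0 <= mu * A k by rewrite mulr_ge0 ?(ltW Hmu) ?A_ge0.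
  lra.
Qed.

Lemma key_ineq (u d w : V) (l m e s : R) : 0 < l -> 0 < m ->
  nrm ip (l *: w + d) ^+ 2 / (1 + l * m) + 2 * l * e <= s ^+ 2 * nrm ip d ^+ 2 ->
  (1 - s ^+ 2) / (2 * l) * nrm ip d ^+ 2
    <= ip w u - e + m / 2 * nrm ip u ^+ 2 + 1 / (2 * l) * nrm ip (u + d) ^+ 2.
Proof.
move=> l0 m0 H.
set c := 1 + l * m.
have c0 : 0 < c by rewrite /c; have := mulr_gt0 l0 m0; lra.
have H' : nrm ip (l *: w + d) ^+ 2 + 2 * l * c * e <= c * s ^+ 2 * nrm ip d ^+ 2.
  have := ler_wpM2l (ltW c0) H.
  have -> : c * (nrm ip (l *: w + d) ^+ 2 / c + 2 * l * e)
    = nrm ip (l *: w + d) ^+ 2 + 2 * l * c * e by field; exact: lt0r_neq0.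
  by rewrite mulrA.
have E : 2 * l * c * ((ip w u - e + m / 2 * nrm ip u ^+ 2 + 1 / (2 * l) * nrm ip (u + d) ^+ 2)
            - (1 - s ^+ 2) / (2 * l) * nrm ip d ^+ 2)
   = nrm ip (c *: u + l *: w + d) ^+ 2 - nrm ip (l *: w + d) ^+ 2
     - 2 * l * c * e + c * s ^+ 2 * nrm ip d ^+ 2.
  rewrite /c; ipx.
  rewrite ?(ipC w u) ?(ipC d u) ?(ipC d w).
  field; exact: lt0r_neq0.
have X0 := nrm2_ge0 (c *: u + l *: w + d).
have : 0 <= 2 * l * c * ((ip w u - e + m / 2 * nrm ip u ^+ 2 + 1 / (2 * l) * nrm ip (u + d) ^+ 2)
            - (1 - s ^+ 2) / (2 * l) * nrm ip d ^+ 2).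
  rewrite E; lra.
rewrite pmulr_rge0 ?subr_ge0 //.
by rewrite mulr_gt0 // mulr_gt0.
Qed.

Lemma hE k : (f (y k.+1) + g (y k.+1))%E = (Fv k.+1 + Gv k.+1)%:E.
Proof.
have [u [w' [_ [Hu Hw]]]] := sub_ex k.
have -> : f (y k.+1) = (Fv k.+1)%:E := fin_of_sub _ _ _ _ Hf Hu.
have -> : g (y k.+1) = (Gv k.+1)%:E := fin_of_sub _ _ _ _ Hg Hw.
by rewrite -EFinD.
Qed.

Lemma lamE k : lam k.+1 = a k.+1 ^+ 2 /
   ((1 + mu * A k) * (A k + a k.+1) + mu * A k * a k.+1).
Proof.
have Hs := a_def k.
set S := (1 + 2 * mu * A k) ^+ 2 * lam k.+1 ^+ 2 + 4 * (1 + mu * A k) * A k * lam k.+1 in Hs.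
have hmA : 0 <= mu * A k by rewrite mulr_ge0 ?(ltW Hmu) ?A_ge0.
have S0 : 0 <= S.
  by rewrite /S addr_ge0 ?sqr_ge0 ?mulr_ge0 ?sqr_ge0 ?A_ge0 ?(ltW (lam_pos k)) //; lra.
have Hq := sqr_sqrtr S0.
have Esq : Num.sqrt S = 2 * a k.+1 - (1 + 2 * mu * A k) * lam k.+1 by rewrite Hs; field.
rewrite Esq in Hq; move: Hq => Hq'.
have D0 : 0 < (1 + mu * A k) * (A k + a k.+1) + mu * A k * a k.+1.
  have := a_pos k; have := A_ge0 k => h1 h2.
  have h3 : 0 <= mu * A k by rewrite mulr_ge0 ?(ltW Hmu).
  have h4 : 0 < (1 + mu * A k) * (A k + a k.+1) by rewrite mulr_gt0; lra.
  have h5 : 0 <= mu * A k * a k.+1 by rewrite mulr_ge0 // ltW.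
  lra.
apply: (mulIf (lt0r_neq0 D0)); rewrite divfK ?lt0r_neq0 //.
move: Hq'; rewrite /S => Hq'.
have : 4 * (a k.+1 ^+ 2 - lam k.+1 * ((1 + mu * A k) * (A k + a k.+1) + mu * A k * a k.+1)) = 0.
  rewrite -[RHS](subrr (((1 + 2 * mu * A k) ^+ 2 * lam k.+1 ^+ 2 + 4 * (1 + mu * A k) * A k * lam k.+1))).
  rewrite -{1}Hq'; ring.
move/eqP; rewrite mulf_eq0 /= subr_eq0 => /orP [|/eqP ->] //.
by move=> /eqP; lra.
Qed.

Lemma hyk k : exists Hk, ((A k)%:E * (f (y k) + g (y k)))%E = (A k * Hk)%:E
   /\ A k * gr k.+1 (y k) <= A k * Hk.
Proof.
case: k => [|k].
  by exists 0; rewrite A0E mul0e !mul0r.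
exists (Fv k.+1 + Gv k.+1); rewrite hE -EFinM; split => //.
apply: ler_wpM2l; first exact: A_ge0.
by have := gr_le k.+1 (y k.+1); rewrite hE lee_fin.
Qed.

Lemma main_lem (k : nat) (z : V) :
    let h := fun w : V => (f w + g w)%E in
    let gam := gamma ip mu f g y v eps in
    let xtil := (a k.+1 / A k.+1) *: z + (A k / A k.+1) *: y k in
    let zk := (a k.+1 / A k.+1) *: x k + (A k / A k.+1) *: y k in
    let Delta := (1 + mu * A k) * A k.+1 / (2 * a k.+1 ^+ 2) * nrm ip (xtil - zk) ^+ 2
                 + mu * A k / (2 * a k.+1) * nrm ip (xtil - y k) ^+ 2 in
    let LHS := ((A k)%:E * h (y k)
                + (A k.+1)%:E * Gamma ip mu f g y v eps a A k.+1 z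
                + (1 / 2 * nrm ip (z - x 0) ^+ 2)%:E)%E in
    [/\ ((a k.+1)%:E * gam k.+1 z + (A k)%:E * gam k.+1 (y k)
         = (A k.+1)%:E * gam k.+1 xtil
           + (mu * a k.+1 * A k / (2 * A k.+1) * nrm ip (z - y k) ^+ 2)%:E)%E,
        (beta ip mu f g x y v eps a A k + (A k.+1)%:E * (gam k.+1 xtil + Delta%:E)
           <= LHS)%E,
        Delta = 1 / (2 * lam k.+1) *
                  (nrm ip (xtil - xt k) ^+ 2
                   + mu * (1 + mu * A k) * lam k.+1 ^+ 2 * A k / (a k.+1 * A k.+1)
                     * nrm ip (x k - y k) ^+ 2) &
        (beta ip mu f g x y v eps a A k + (A k.+1)%:E * h (y k.+1)
           + ((1 - sigma ^+ 2) / 2 * (A k.+1 / lam k.+1) * nrm ip (y k.+1 - xt k) ^+ 2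
              + mu * (1 + mu * A k) * lam k.+1 * A k / (2 * a k.+1)
                * nrm ip (x k - y k) ^+ 2)%:E
           <= LHS)%E].
Proof.
move=> h gam xtil zk Delta LHS.
have Ha := a_pos k.
have HA := A_ge0 k.
have HA1 := A_pos k.
have HA1E := A_rec k.
have a0 : a k.+1 != 0 := lt0r_neq0 Ha.
have A10 : A k + a k.+1 != 0 by rewrite -HA1E lt0r_neq0.
have Ea : a k.+1 * gr k.+1 z + A k * gr k.+1 (y k)
        = A k.+1 * gr k.+1 xtil + mu * a k.+1 * A k / (2 * A k.+1) * nrm ip (z - y k) ^+ 2.
  rewrite /gr /xtil; ipx.
  rewrite ?(ipC (y k) z) ?(ipC (y k.+1) z) ?(ipC (v k.+1) z)
        ?(ipC (y k.+1) (y k)) ?(ipC (v k.+1) (y k)) ?(ipC (v k.+1) (y k.+1)).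
  rewrite HA1E; field; exact: A10.
have Ec : Delta = 1 / (2 * lam k.+1) *
                  (nrm ip (xtil - xt k) ^+ 2
                   + mu * (1 + mu * A k) * lam k.+1 ^+ 2 * A k / (a k.+1 * A k.+1)
                     * nrm ip (x k - y k) ^+ 2).
  rewrite /Delta /xtil /zk xt_def; ipx.
  rewrite ?(ipC (x k) z) ?(ipC (y k) z) ?(ipC (y k) (x k)).
  rewrite lamE HA1E; field.
  rewrite A10 a0 /=; apply: lt0r_neq0.
  have h3 : 0 <= mu * A k by rewrite mulr_ge0 ?(ltW Hmu).
  have h4 : 0 < (1 + mu * A k) * (A k + a k.+1) by rewrite mulr_gt0; lra.
  have h5 : 0 <= mu * A k * a k.+1 by rewrite mulr_ge0 // ltW.
  lra.
have DeltaA : A k.+1 * Delta = (1 + mu * A k) / 2 * nrm ip (z - x k) ^+ 2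
      + mu * a k.+1 * A k / (2 * A k.+1) * nrm ip (z - y k) ^+ 2.
  rewrite /Delta /xtil /zk; ipx.
  rewrite ?(ipC (x k) z) ?(ipC (y k) z) ?(ipC (y k) (x k)).
  rewrite HA1E; field; rewrite A10 a0 //.
have [Hk [EH HH]] := hyk k.
have ELHS : LHS = (A k * Hk + Qs k.+1 z + 1 / 2 * nrm ip (z - x 0) ^+ 2)%:E.
  by rewrite /LHS /h EH AGammaE -!EFinD.
have Breal : Qs k (x k) + 1 / 2 * nrm ip (x k - x 0) ^+ 2 + A k.+1 * (gr k.+1 xtil + Delta)
    <= A k * Hk + Qs k.+1 z + 1 / 2 * nrm ip (z - x 0) ^+ 2.
  rewrite Qs_rec mulrDr DeltaA.
  have := Pk k z.
  move: Ea HH; lra.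
split.
- by rewrite /gam !gamE -!EFinM -!EFinD Ea.
- by rewrite betaE ELHS /gam gamE -(EFinD (gr _ _)) -EFinM -EFinD lee_fin.
- exact: Ec.
rewrite betaE ELHS /h hE -EFinM -!EFinD lee_fin.
suff : A k.+1 * (Fv k.+1 + Gv k.+1)
   + ((1 - sigma ^+ 2) / 2 * (A k.+1 / lam k.+1) * nrm ip (y k.+1 - xt k) ^+ 2
      + mu * (1 + mu * A k) * lam k.+1 * A k / (2 * a k.+1) * nrm ip (x k - y k) ^+ 2)
   <= A k.+1 * (gr k.+1 xtil + Delta).
  by move: Breal; lra.
have Hp := hpe k.
rewrite -addrA in Hp.
have K := key_ineq (xtil - y k.+1) (y k.+1 - xt k) (v k.+1) (lam k.+1) mu (eps k.+1) sigma
   (lam_pos k) Hmu Hp.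
have Eud : (xtil - y k.+1) + (y k.+1 - xt k) = xtil - xt k by rewrite addrA subrK.
rewrite Eud in K.
have l0 : lam k.+1 != 0 := lt0r_neq0 (lam_pos k).
have A1n : A k.+1 != 0 := lt0r_neq0 HA1.
have E2 : A k.+1 * (gr k.+1 xtil + Delta) - (A k.+1 * (Fv k.+1 + Gv k.+1)
   + ((1 - sigma ^+ 2) / 2 * (A k.+1 / lam k.+1) * nrm ip (y k.+1 - xt k) ^+ 2
      + mu * (1 + mu * A k) * lam k.+1 * A k / (2 * a k.+1) * nrm ip (x k - y k) ^+ 2))
   = A k.+1 * ((ip (v k.+1) (xtil - y k.+1) - eps k.+1 + mu / 2 * nrm ip (xtil - y k.+1) ^+ 2
                + 1 / (2 * lam k.+1) * nrm ip (xtil - xt k) ^+ 2)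
               - (1 - sigma ^+ 2) / (2 * lam k.+1) * nrm ip (y k.+1 - xt k) ^+ 2).
  rewrite Ec /gr; field; rewrite l0 a0 A1n //.
rewrite -subr_ge0 E2 mulr_ge0 ?subr_ge0 // ltW //.
Qed.

End IP.

Theorem lemma2p3 (R : realType) (V : vectType R) (ip : V -> V -> R)
  (f g : V -> \bar R) (mu sigma : R)
  (x y v xt : nat -> V) (eps lam a A : nat -> R) :
  is_inner_product ip ->
  proper_fun f -> closed_fun ip f -> convex_mod ip 0 f ->
  proper_fun g -> closed_fun ip g -> 0 < mu -> convex_mod ip mu g ->
  (exists z : V, (f z + g z < +oo)%E) ->
  alg1 ip mu f g sigma x y v xt eps lam a A ->
  forall (k : nat) (z : V),
    let h := fun w : V => (f w + g w)%E in
    let gam := gamma ip mu f g y v eps in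
    let xtil := (a k.+1 / A k.+1) *: z + (A k / A k.+1) *: y k in
    let zk := (a k.+1 / A k.+1) *: x k + (A k / A k.+1) *: y k in
    let Delta := (1 + mu * A k) * A k.+1 / (2 * a k.+1 ^+ 2) * nrm ip (xtil - zk) ^+ 2
                 + mu * A k / (2 * a k.+1) * nrm ip (xtil - y k) ^+ 2 in
    let LHS := ((A k)%:E * h (y k)
                + (A k.+1)%:E * Gamma ip mu f g y v eps a A k.+1 z
                + (1 / 2 * nrm ip (z - x 0) ^+ 2)%:E)%E in
    [/\ ((a k.+1)%:E * gam k.+1 z + (A k)%:E * gam k.+1 (y k)
         = (A k.+1)%:E * gam k.+1 xtil
           + (mu * a k.+1 * A k / (2 * A k.+1) * nrm ip (z - y k) ^+ 2)%:E)%E,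
        (beta ip mu f g x y v eps a A k + (A k.+1)%:E * (gam k.+1 xtil + Delta%:E)
           <= LHS)%E,
        Delta = 1 / (2 * lam k.+1) *
                  (nrm ip (xtil - xt k) ^+ 2
                   + mu * (1 + mu * A k) * lam k.+1 ^+ 2 * A k / (a k.+1 * A k.+1)
                     * nrm ip (x k - y k) ^+ 2) &
        (beta ip mu f g x y v eps a A k + (A k.+1)%:E * h (y k.+1)
           + ((1 - sigma ^+ 2) / 2 * (A k.+1 / lam k.+1) * nrm ip (y k.+1 - xt k) ^+ 2
              + mu * (1 + mu * A k) * lam k.+1 * A k / (2 * a k.+1)
                * nrm ip (x k - y k) ^+ 2)%:E
           <= LHS)%E].
Proof.
move=> Hip Hf _ _ Hg _ Hmu Hgc _ Halg k z.
exact: (@main_lem R V ip Hip f g mu sigma x y v xt eps lam a A Hf Hg Hmu Hgc Halg k z).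
Qed.
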